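(* Let $x_s<x_t$ be integers, let $C\ge 0$, and let $f:[x_s,x_t]\to\mathbb{R}$ be such that $([x_s,x_t],f)$ is an Ameso($C$) pair. Suppose there exist $x^0\in[x_s,x_t]$ and a positive integer $b$ with $[x^0,x^0+b]\subseteq[x_s,x_t]$ such that (a) $f(x^0)=\min_{y\in[x^0,x^0+b]}f(y)$ and (b) $f(x^0)+C\le\max_{y\in[x^0,x^0+b]}f(y)$. Let $z$ be the largest element of $[x^0,x^0+b]$ at which $f$ attains $\max_{y\in[x^0,x^0+b]}f(y)$. Then $x^0+\frac b2<z\le x^0+b$.
   Context: For integers $a\le b$, $[a,b]$ denotes the set of integers $\{a,a+1,\dots,b\}$. Floors and ceilings of vectors are taken componentwise. A set $D^n\subseteq\mathbb{Z}^n$ is an Ameso set if $\lceil(\vec x+\vec y)/2\rceil,\lfloor(\vec x+\vec y)/2\rfloor\in D^n$ for all $\vec x,\vec y\in D^n$. For $C\ge 0$, $(D^n,f)$ is an Ameso($C$) pair if $D^n$ is an Ameso set, $f:D^n\to\mathbb{R}$ is bounded below, and $f(\vec x)+f(\vec y)+C\ge f(\lceil(\vec x+\vec y)/2\rceil)+f(\lfloor(\vec x+\vec y)/2\rfloor)$ for all $\vec x,\vec y\in D^n$. *)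

(* Defs.v *)
From Stdlib Require Import ZArith Reals.
Open Scope R_scope.
Open Scope Z_scope.

Definition mid_floor (x y : Z) : Z := Z.div (x + y) 2.
Definition mid_ceil (x y : Z) : Z := - Z.div (- (x + y)) 2.

Definition in_zint (a b x : Z) : Prop := a <= x <= b.

(* ([a,b], f) is an Ameso(C) pair (the interval [a,b] is an Ameso set;
   f is real-valued on a finite set hence bounded below). *)
Definition ameso_pair (a b : Z) (C : R) (f : Z -> R) : Prop :=
  forall x y, in_zint a b x -> in_zint a b y ->
    (f (mid_ceil x y) + f (mid_floor x y) <= f x + f y + C)%R.

(* Main.v *)
Require Import Defs.
From Stdlib Require Import ZArith Reals Lia Lra.
Open Scope R_scope.
Open Scope Z_scope.

Theorem lemma2 (xs xt : Z) (C : R) (f : Z -> R) (x0 b z : Z) (M : R) :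
  (xs < xt)%Z ->
  (0 <= C)%R ->
  ameso_pair xs xt C f ->
  in_zint xs xt x0 ->
  (0 < b)%Z ->
  (forall y, in_zint x0 (x0 + b)%Z y -> in_zint xs xt y) ->
  (* (a) f x0 is the minimum of f on [x0, x0+b] *)
  (forall y, in_zint x0 (x0 + b)%Z y -> (f x0 <= f y)%R) ->
  (* M is the maximum of f on [x0, x0+b] *)
  (exists y, in_zint x0 (x0 + b)%Z y /\ f y = M) ->
  (forall y, in_zint x0 (x0 + b)%Z y -> (f y <= M)%R) ->
  (* (b) *)
  (f x0 + C <= M)%R ->
  (* z is the largest maximizer on [x0, x0+b] *)
  in_zint x0 (x0 + b)%Z z -> f z = M ->
  (forall y, in_zint x0 (x0 + b)%Z y -> f y = M -> (y <= z)%Z) ->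
  (2 * x0 + b < 2 * z /\ z <= x0 + b)%Z.
Proof.
  intros Hxs HC Ham Hx0 Hb Hsub Hmin [w [Hw HwM]] Hmax HCM Hz HfzM Hlast.
  unfold in_zint in *.
  split; [|lia].
  destruct (Z_lt_le_dec (2 * x0 + b) (2 * z)) as [H|H]; [exact H|exfalso].
  set (y := 2 * z - x0).
  assert (Hy : x0 <= y <= x0 + b) by (unfold y; lia).
  assert (Hf : mid_floor x0 y = z).
  { unfold mid_floor, y. replace (x0 + (2 * z - x0)) with (z * 2) by ring.
    apply Z.div_mul; lia. }
  assert (Hc : mid_ceil x0 y = z).
  { unfold mid_ceil, y. replace (- (x0 + (2 * z - x0))) with ((- z) * 2) by ring.
    rewrite Z.div_mul; lia. }
  pose proof (Ham x0 y (Hsub x0 ltac:(lia)) (Hsub y Hy)) as A.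
  rewrite Hf in A; rewrite Hc in A; rewrite HfzM in A.
  pose proof (Hmax y Hy) as B.
  assert (fy : f y = M) by lra.
  pose proof (Hlast y Hy fy).
  assert (Ez : z = x0) by (unfold y in *; lia). clear Hf Hc. rewrite Ez in *.
  pose proof (Hmin (x0 + b) ltac:(lia)).
  pose proof (Hmax (x0 + b) ltac:(lia)).
  pose proof (Hlast (x0 + b) ltac:(lia) ltac:(lra)). lia.
Qed.
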